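(* For every instance of a combinatorial optimization problem (constrained or unconstrained), with $m$ the number of distinct cost values over the feasible solutions, the dynamical Lie algebra of QWOA satisfies $$\dim(\mathfrak g_{\mathrm{QWOA}})\le m^2+1 .$$
   Context: An instance of a combinatorial optimization problem consists of a finite nonempty set $\mathcal S'$ of feasible solutions and a cost function $C:\mathcal S'\to\mathbb R$ (for an unconstrained problem, $\mathcal S'$ is the whole solution space). Let $N=|\mathcal S'|$ and let $m=|C(\mathcal S')|$ be the number of distinct cost values over the feasible solutions. Work in $\mathbb C^N$ with orthonormal basis $\{|z\rangle : z\in\mathcal S'\}$ (for constrained problems this is the indexed feasible subspace, obtained from the full space by a fixed change of basis). The problem Hamiltonian is the diagonal matrix $H_C$ with $H_C|z\rangle=C(z)|z\rangle$. The mixing Hamiltonian is the $N\times N$ all-ones matrix $H_M=J$; it differs from the adjacency matrix of the complete graph $K_N$ by the identity matrix, so it generates the same QWOA mixing unitaries $e^{-itH_M}$ up to a global phase. The dynamical Lie algebra (DLA) of QWOA, $\mathfrak g_{\mathrm{QWOA}}$, is the real Lie algebra generated by $iH_C$ and $iH_M$, i.e. the smallest real linear subspace of the $N\times N$ complex matrices that contains $iH_C$ and $iH_M$ and is closed under the commutator $[A,B]=AB-BA$; its dimension is its dimension as a real vector space. *)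

(* Defs.v *)
From HB Require Import structures.
From mathcomp Require Import all_boot all_order all_algebra.
From mathcomp Require Import complex.
Set Implicit Arguments. Unset Strict Implicit. Unset Printing Implicit Defensive.
Import Order.TTheory GRing.Theory Num.Theory.
Local Open Scope ring_scope.

Section QWOA.
Variable R : rcfType.

Definition rC (r : R) : R[i] := Complex r 0.
Definition iC : R[i] := Complex 0 1.

Definition num_costs (T : finType) (C : T -> R) : nat :=
  size (undup [seq C x | x <- enum T]).

(* problem Hamiltonian H_C : diagonal, basis |z> indexed by enum T *)
Definition H_C (T : finType) (C : T -> R) : 'M[R[i]]_#|T| :=
  \matrix_(i, j) (if i == j then rC (C (enum_val i)) else 0).

Definition H_M (n : nat) : 'M[R[i]]_n := const_mx 1.

Definition lie_bracket (n : nat) (A B : 'M[R[i]]_n) : 'M[R[i]]_n :=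
  A *m B - B *m A.

Definition real_lie_closed (n : nat) (S : 'M[R[i]]_n -> Prop) : Prop :=
  [/\ S 0,
      (forall A B, S A -> S B -> S (A + B)),
      (forall (r : R) A, S A -> S (rC r *: A)) &
      (forall A B, S A -> S B -> S (lie_bracket A B))].

Definition gen_real_lie (n : nat) (X Y : 'M[R[i]]_n) (A : 'M[R[i]]_n) : Prop :=
  forall S : 'M[R[i]]_n -> Prop, real_lie_closed S -> S X -> S Y -> S A.

Definition dla_QWOA (T : finType) (C : T -> R) : 'M[R[i]]_#|T| -> Prop :=
  gen_real_lie (iC *: H_C C) (iC *: H_M #|T|).

Definition real_lin_indep (n : nat) (s : seq 'M[R[i]]_n) : Prop :=
  forall c : 'I_(size s) -> R,
    \sum_(k < size s) rC (c k) *: s`_k = 0 -> forall k, c k = 0.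

(* real dimension of S is at most d: every real-linearly independent
   finite family in S has at most d elements *)
Definition real_dim_le (n : nat) (S : 'M[R[i]]_n -> Prop) (d : nat) : Prop :=
  forall s : seq 'M[R[i]]_n,
    (forall A, A \in s -> S A) -> real_lin_indep s -> (size s <= d)%N.

End QWOA.

(* Main.v *)
Require Import Defs.
From HB Require Import structures.
From mathcomp Require Import all_boot all_order all_algebra.
From mathcomp Require Import complex.
From mathcomp Require Import ring.
Set Implicit Arguments. Unset Strict Implicit. Unset Printing Implicit Defensive.
Import Order.TTheory GRing.Theory Num.Theory.
Local Open Scope ring_scope.

Definition cv (R : rcfType) (T : finType) (C : T -> R) (i : 'I_#|T|) : R :=
  C (enum_val i).
Definition Zmat (R : rcfType) (T : finType) (C : T -> R) (z : R -> R -> R[i])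
  : 'M[R[i]]_#|T| := \matrix_(i, j) z (cv C i) (cv C j).
Definition inW (R : rcfType) (T : finType) (C : T -> R) (A : 'M[R[i]]_#|T|) :=
  exists a z, A = a *: H_C C + Zmat C z.
Definition skewh (R : rcfType) n (A : 'M[R[i]]_n) :=
  forall i j, A j i = - conjc (A i j).

Lemma rCD (R : rcfType) (x y : R) : rC (x + y) = rC x + rC y.
Proof. by rewrite /rC; apply/eqP; rewrite eq_complex /= addr0 !eqxx. Qed.
Lemma rCM (R : rcfType) (x y : R) : rC (x * y) = rC x * rC y.
Proof. by rewrite /rC; apply/eqP; rewrite eq_complex /= !mulr0 !mul0r subr0 addr0 !eqxx. Qed.
Lemma rCN (R : rcfType) (x : R) : rC (- x) = - rC x.
Proof. by rewrite /rC; apply/eqP; rewrite eq_complex /= oppr0 !eqxx. Qed.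
Lemma rC0 (R : rcfType) : rC (0 : R) = 0. Proof. by []. Qed.
Lemma conj_rC (R : rcfType) (x : R) : conjc (rC x) = rC x.
Proof. by rewrite /rC /conjc /= oppr0. Qed.
Lemma conj_iC (R : rcfType) : conjc (iC R) = - iC R.
Proof. by apply/eqP; rewrite eq_complex /= oppr0 !eqxx. Qed.

Lemma HCE (R : rcfType) (T : finType) (C : T -> R) :
  H_C C = diag_mx (\row_i rC (cv C i)).
Proof.
apply/matrixP => i j; rewrite !mxE; case: eqP => [->|_]; first by rewrite mulr1n.
by rewrite mulr0n.
Qed.

Lemma HZ (R : rcfType) (T : finType) (C : T -> R) z :
  H_C C *m Zmat C z = Zmat C (fun x y => rC x * z x y).
Proof. by rewrite HCE mul_diag_mx; apply/matrixP => i j; rewrite !mxE. Qed.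

Lemma ZH (R : rcfType) (T : finType) (C : T -> R) z :
  Zmat C z *m H_C C = Zmat C (fun x y => z x y * rC y).
Proof. by rewrite HCE mul_mx_diag; apply/matrixP => i j; rewrite !mxE. Qed.

Lemma ZZ (R : rcfType) (T : finType) (C : T -> R) z z' :
  Zmat C z *m Zmat C z' =
  Zmat C (fun x y => \sum_k z x (cv C k) * z' (cv C k) y).
Proof.
apply/matrixP => i j; rewrite !mxE; apply: eq_bigr => k _; by rewrite !mxE.
Qed.

Lemma ZD (R : rcfType) (T : finType) (C : T -> R) z z' :
  Zmat C z + Zmat C z' = Zmat C (fun x y => z x y + z' x y).
Proof. by apply/matrixP => i j; rewrite !mxE. Qed.
Lemma ZN (R : rcfType) (T : finType) (C : T -> R) z :
  - Zmat C z = Zmat C (fun x y => - z x y).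
Proof. by apply/matrixP => i j; rewrite !mxE. Qed.
Lemma ZZs (R : rcfType) (T : finType) (C : T -> R) c z :
  c *: Zmat C z = Zmat C (fun x y => c * z x y).
Proof. by apply/matrixP => i j; rewrite !mxE. Qed.

Lemma inW_closed (R : rcfType) (T : finType) (C : T -> R) :
  real_lie_closed (@inW R T C).
Proof.
split.
- exists 0, (fun _ _ => 0); apply/matrixP => i j; rewrite !mxE; ring.
- move=> A B [a [z ->]] [b [z' ->]]; exists (a + b), (fun x y => z x y + z' x y).
  by rewrite -ZD scalerDl; rewrite addrACA.
- move=> r A [a [z ->]]; exists (rC r * a), (fun x y => rC r * z x y).
  by rewrite scalerDr scalerA ZZs.
- move=> A B [a [z ->]] [b [z' ->]]; exists 0.
  exists (fun x y => a * (rC x * z' x y - z' x y * rC y)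
     + b * (z x y * rC y - rC x * z x y)
     + \sum_k (z x (cv C k) * z' (cv C k) y - z' x (cv C k) * z (cv C k) y)).
  rewrite /lie_bracket !mulmxDl !mulmxDr -!scalemxAl -!scalemxAr !HZ !ZH !ZZ.
  rewrite !scalerA (mulrC b a) scale0r add0r.
  apply/matrixP => i j; rewrite !mxE sumrB; ring.
Qed.

Lemma conjM (R : rcfType) (x y : R[i]) : conjc (x * y) = conjc x * conjc y.
Proof. exact: rmorphM. Qed.
Lemma conjD (R : rcfType) (x y : R[i]) : conjc (x + y) = conjc x + conjc y.
Proof. exact: rmorphD. Qed.
Lemma conjB (R : rcfType) (x y : R[i]) : conjc (x - y) = conjc x - conjc y.
Proof. exact: rmorphB. Qed.
Lemma conjN (R : rcfType) (x : R[i]) : conjc (- x) = - conjc x.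
Proof. exact: rmorphN. Qed.
Lemma conj0 (R : rcfType) : conjc (0 : R[i]) = 0.
Proof. exact: rmorph0. Qed.
Lemma conj_sum (R : rcfType) n (F : 'I_n -> R[i]) :
  conjc (\sum_k F k) = \sum_k conjc (F k).
Proof. exact: rmorph_sum. Qed.

Lemma skewh_closed (R : rcfType) n : real_lie_closed (@skewh R n).
Proof.
split.
- by move=> i j; rewrite !mxE conj0 oppr0.
- by move=> A B hA hB i j; rewrite !mxE hA hB conjD opprD.
- by move=> r A hA i j; rewrite !mxE hA conjM conj_rC mulrN.
- move=> A B hA hB i j.
  have e1 : \sum_k A j k * B k i = \sum_k conjc (B i k * A k j).
    by apply: eq_bigr => k _; rewrite hA hB mulrNN conjM mulrC.
  have e2 : \sum_k B j k * A k i = \sum_k conjc (A i k * B k j).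
    by apply: eq_bigr => k _; rewrite hA hB mulrNN conjM mulrC.
  by rewrite !mxE e1 e2 -!conj_sum -conjB -conjN opprB.
Qed.

Lemma dla_sub (R : rcfType) (T : finType) (C : T -> R) A :
  dla_QWOA C A -> skewh A /\ inW C A.
Proof.
move=> hA; apply: (hA (fun A => skewh A /\ inW C A)).
- have [h1 h2 h3 h4] := skewh_closed R #|T|.
  have [g1 g2 g3 g4] := inW_closed C.
  split; [by split | | |].
  + by move=> X Y [? ?] [? ?]; split; [apply: h2 | apply: g2].
  + by move=> r X [? ?]; split; [apply: h3 | apply: g3].
  + by move=> X Y [? ?] [? ?]; split; [apply: h4 | apply: g4].
- split.
  + move=> i j; rewrite !mxE; case: (eqVneq i j) => [->|ne].
    * by rewrite conjM conj_rC conj_iC mulNr opprK.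
    * by rewrite mulr0 conj0 oppr0.
  + exists (iC R), (fun _ _ => 0).
    by apply/matrixP => i j; rewrite !mxE addr0.
- split.
  + by move=> i j; rewrite !mxE mulr1 conj_iC opprK.
  + exists 0, (fun _ _ => iC R).
    by apply/matrixP => i j; rewrite !mxE mul0r mulr1 add0r.
Qed.

Definition Ucost (R : rcfType) (T : finType) (C : T -> R) : seq R :=
  undup [seq C x | x <- enum T].
Definition Emat (R : rcfType) (T : finType) (C : T -> R) (v w : R) :=
  Zmat C (fun x y => if (x == v) && (y == w) then 1 else 0).
Definition Ls (R : rcfType) (T : finType) (C : T -> R) : seq 'M[R[i]]_#|T| :=
  H_C C :: [seq Emat C v w | v <- Ucost C, w <- Ucost C].
Definition mxL (R : rcfType) n (L : seq 'M[R[i]]_n) : 'M[R[i]]_(size L, n * n) :=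
  \matrix_(k < size L) mxvec L`_k.

Lemma mem_sub (R : rcfType) n (L : seq 'M[R[i]]_n) B :
  B \in L -> (mxvec B <= mxL L)%MS.
Proof.
move=> hB; rewrite -(nth_index 0 hB).
have hk : (index B L < size L)%N by rewrite index_mem.
by rewrite -(rowK (fun k : 'I_(size L) => mxvec L`_k) (Ordinal hk)) row_sub.
Qed.

Lemma cvU (R : rcfType) (T : finType) (C : T -> R) i : cv C i \in Ucost C.
Proof. by rewrite /Ucost mem_undup; apply: map_f; rewrite mem_enum. Qed.

Lemma Zmat_decomp (R : rcfType) (T : finType) (C : T -> R) z :
  Zmat C z = \sum_(v <- Ucost C) \sum_(w <- Ucost C) z v w *: Emat C v w.
Proof.
apply/matrixP => i j; rewrite summxE.
have inner v : (\sum_(w <- Ucost C) z v w *: Emat C v w) i j =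
    if v == cv C i then z v (cv C j) else 0.
  rewrite summxE (bigD1_seq (cv C j)) ?cvU ?undup_uniq //=.
  rewrite [X in _ + X]big1 ?addr0.
    by rewrite !mxE eqxx andbT eq_sym; case: ifP; rewrite ?mulr1 ?mulr0.
  by move=> w ne; rewrite !mxE [cv C j == _]eq_sym (negbTE ne) andbF mulr0.
under eq_bigr do rewrite inner.
rewrite (bigD1_seq (cv C i)) ?cvU ?undup_uniq //= eqxx.
rewrite [X in _ + X]big1 ?addr0; first by rewrite mxE.
by move=> v ne; rewrite (negbTE ne).
Qed.

Lemma W_sub (R : rcfType) (T : finType) (C : T -> R) A :
  inW C A -> (mxvec A <= mxL (Ls C))%MS.
Proof.
move=> [a [z ->]]; rewrite linearD linearZ /=; apply: addmx_sub.
  apply: scalemx_sub; apply: (@mem_sub R #|T| (Ls C)); exact: mem_head.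
rewrite Zmat_decomp linear_sum big_seq; apply: summx_sub => v vU.
rewrite linear_sum big_seq; apply: summx_sub => w wU.
rewrite linearZ /=; apply: scalemx_sub; apply: (@mem_sub R #|T| (Ls C)).
by rewrite in_cons; apply/orP; right; apply: allpairs_f.
Qed.

Lemma decompC (R : rcfType) (x : R[i]) :
  x = rC (complex.Re x) + iC R * rC (complex.Im x).
Proof.
case: x => a b; apply/eqP; rewrite eq_complex /=.
by rewrite !mul0r !mulr0 !mul1r subr0 !addr0 !add0r !eqxx.
Qed.

Lemma iCiC (R : rcfType) : iC R * iC R = -1.
Proof.
apply/eqP; rewrite eq_complex /=.
by rewrite !mul0r !mulr0 !mul1r sub0r !addr0 oppr0 !eqxx.
Qed.

Lemma XY0 (R : rcfType) n (X Y : 'M[R[i]]_n) :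
  skewh X -> skewh Y -> X + iC R *: Y = 0 -> X = 0 /\ Y = 0.
Proof.
move=> hX hY hXY.
have e i j : X i j + iC R * Y i j = 0.
  by have := congr1 (fun M : 'M[R[i]]_n => M i j) hXY; rewrite !mxE.
have ent i j : X i j = 0 /\ Y i j = 0.
  have e1 := e i j.
  have e2 := congr1 conjc (e j i).
  rewrite hX hY conjD conjN conjM conjN !conjcK conj_iC conj0 in e2.
  have ha : X i j *+ 2 = 0.
    have -> : X i j *+ 2 = (X i j + iC R * Y i j) - (- X i j + - iC R * - Y i j).
      by rewrite mulr2n; ring.
    by rewrite e1 e2 subrr.
  have hX0 : X i j = 0.
    by move/eqP: ha; rewrite mulrn_eq0 /= => /eqP.
  split => //.
  have : iC R * Y i j = 0 by rewrite -e1 hX0 add0r.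
  move/eqP; rewrite mulf_eq0 => /orP [|/eqP //].
  by rewrite /iC eq_complex /= oner_eq0 andbF.
by split; apply/matrixP => i j; rewrite mxE; case: (ent i j).
Qed.

Lemma skewh_comb (R : rcfType) n (s : seq 'M[R[i]]_n) (c : 'I_(size s) -> R) :
  (forall A, A \in s -> skewh A) -> skewh (\sum_k rC (c k) *: s`_k).
Proof.
move=> hs; have [h1 h2 h3 _] := skewh_closed R n.
apply: (big_ind (@skewh R n)) => // k _; apply: h3; apply: hs.
exact: mem_nth.
Qed.

Lemma cindep (R : rcfType) n (s : seq 'M[R[i]]_n) :
  (forall A, A \in s -> skewh A) -> real_lin_indep s ->
  forall u : 'I_(size s) -> R[i], \sum_k u k *: s`_k = 0 -> forall k, u k = 0.
Proof.
move=> hs hind u hu k.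
set X := \sum_k rC (complex.Re (u k)) *: s`_k.
set Y := \sum_k rC (complex.Im (u k)) *: s`_k.
have hXY : X + iC R *: Y = 0.
  rewrite -hu /X /Y scaler_sumr -big_split; apply: eq_bigr => l _.
  by rewrite scalerA [u l in RHS]decompC scalerDl.
have [X0 Y0] := XY0 (skewh_comb _ hs) (skewh_comb _ hs) hXY.
rewrite (decompC (u k)) (hind _ X0 k) (hind _ Y0 k).
by rewrite rC0 mulr0 addr0.
Qed.

Theorem theorem1 (R : rcfType) (T : finType) (hT : (0 < #|T|)%N) (C : T -> R) :
  real_dim_le (dla_QWOA C) ((num_costs C) ^ 2).+1.
Proof.
move=> s hs hind.
have hsk : forall A, A \in s -> skewh A by move=> A /hs /dla_sub [].
have hW : forall A, A \in s -> inW C A by move=> A /hs /dla_sub [].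
pose M := \matrix_(k < size s) mxvec s`_k.
have sub : (M <= mxL (Ls C))%MS.
  apply/row_subP => k; rewrite rowK; apply: W_sub; apply: hW; exact: mem_nth.
have rk : \rank M = size s.
  apply/eqP; change (row_free M); rewrite -kermx_eq0; apply/eqP.
  apply/eqP; rewrite -submx0; apply/row_subP => i.
  set u := row i (kermx M).
  have : u *m M = 0 by apply/sub_kermxP; exact: row_sub.
  rewrite mulmx_sum_row => hu.
  have hsum : \sum_k u 0 k *: s`_k = 0.
    apply: (can_inj mxvecK); rewrite linear0 linear_sum.
    transitivity (\sum_k u 0 k *: row k M); last exact: hu.
    by apply: eq_bigr => k _; rewrite linearZ /= rowK.
  have h0 := cindep hsk hind hsum.
  rewrite submx0; apply/eqP/rowP => k; rewrite [RHS]mxE.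
  exact: h0.
rewrite -rk; apply: (leq_trans (mxrankS sub)); apply: (leq_trans (rank_leq_row _)).
by rewrite /Ls /= size_allpairs /num_costs mulnn.
Qed.
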